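(* Let $a$ and $b$ be two disjoint finite groups of instances, each instance carrying a binary label, and let $\mathrm{p}^a$ and $\mathrm{p}^b$ be fixed orderings of the instances of $a$ and of $b$, respectively. Assume $n_1^a,n_0^a,n_1^b,n_0^b\ge 1$. Then: (i) there exists a cross-group ordering $o$ of $(\mathrm{p}^a,\mathrm{p}^b)$ with $\Delta\mathrm{URF}^o \le \min(1/n^a,\,1/n^b)$; (ii) there exists a cross-group ordering $o$ with $\Delta\mathrm{xAUC}^o \le \min\big(\max(1/n_1^b,1/n_0^b),\ \max(1/n_1^a,1/n_0^a)\big)$; (iii) there exists a cross-group ordering $o$ with $\Delta\mathrm{PRF}^o \le \min\big(\max(n_0^b/(n_1^a n_0),\,1/n_0),\ \max(n_0^a/(n_1^b n_0),\,1/n_0)\big)$.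
   Context: Each instance $u$ has a label $Y_u\in\{0,1\}$. For a group $g\in\{a,b\}$: $n^g$ is the number of instances in $g$, $n^g_1$ the number with label 1, $n^g_0$ the number with label 0; $n_1=n_1^a+n_1^b$, $n_0=n_0^a+n_0^b$. A cross-group ordering $o$ of $(\mathrm{p}^a,\mathrm{p}^b)$ is a total order (a list) of all instances of $a\cup b$ in which the instances of $a$ appear in the same relative order as in $\mathrm{p}^a$ and the instances of $b$ in the same relative order as in $\mathrm{p}^b$. ''$u$ precedes $v$ in $o$'' means $u$ is ranked above $v$. Metrics induced by $o$: $\mathrm{xAUC}^o(a,b)=\frac{1}{n_1^a n_0^b}\#\{(u,v): u\in a, Y_u=1, v\in b, Y_v=0, u \text{ precedes } v\}$, and $\mathrm{xAUC}^o(b,a)$ symmetrically; $\Delta\mathrm{xAUC}^o=|\mathrm{xAUC}^o(a,b)-\mathrm{xAUC}^o(b,a)|$. $\Delta\mathrm{URF}^o=\frac{1}{n^a n^b}\big|\#\{(u,v):u\in a,v\in b,u\text{ precedes }v\}-\#\{(u,v):u\in a,v\in b,v\text{ precedes }u\}\big|$. $\mathrm{PRF}^o(a)=\frac{1}{n_1^a n_0}\#\{(u,v): u\in a, Y_u=1, Y_v=0, u\text{ precedes } v\}$ (with $v$ ranging over negatives of both groups), $\mathrm{PRF}^o(b)$ symmetrically; $\Delta\mathrm{PRF}^o=|\mathrm{PRF}^o(a)-\mathrm{PRF}^o(b)|$. *)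

(* Defs.v *)
From mathcomp Require Import all_boot all_order all_algebra.
Set Implicit Arguments. Unset Strict Implicit. Unset Printing Implicit Defensive.
Import Order.TTheory GRing.Theory Num.Theory.
Local Open Scope ring_scope.

Section Fairness.
Variable T : eqType.
Variable Y : T -> bool.    (* labels: Y u = true  <-> label 1 *)

Definition nn (s : seq T) : nat := size s.
Definition n1 (s : seq T) : nat := count Y s.
Definition n0 (s : seq T) : nat := count (predC Y) s.

Definition cross_ordering (pa pb o : seq T) : bool :=
  [&& perm_eq o (pa ++ pb), filter (mem pa) o == pa & filter (mem pb) o == pb].

(* u precedes v in o: u is ranked above (earlier in the list) v *)
Definition precedes (o : seq T) (u v : T) : bool := (index u o < index v o)%N.

Definition npairs (s t : seq T) (P : T -> T -> bool) : nat :=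
  (\sum_(u <- s) \sum_(v <- t) P u v)%N.

Variable R : realFieldType.

Definition xAUC (o pg ph : seq T) : R :=
  (npairs pg ph (fun u v => [&& Y u, ~~ Y v & precedes o u v]))%:R
  / ((n1 pg * n0 ph)%N)%:R.

Definition DxAUC (o pa pb : seq T) : R := `|xAUC o pa pb - xAUC o pb pa|.

Definition DURF (o pa pb : seq T) : R :=
  `|(npairs pa pb (fun u v => precedes o u v))%:R
    - (npairs pa pb (fun u v => precedes o v u))%:R| / ((nn pa * nn pb)%N)%:R.

Definition PRF (o pg pa pb : seq T) : R :=
  (npairs pg (pa ++ pb) (fun u v => [&& Y u, ~~ Y v & precedes o u v]))%:R
  / ((n1 pg * (n0 pa + n0 pb))%N)%:R.

Definition DPRF (o pa pb : seq T) : R := `|PRF o pa pa pb - PRF o pb pa pb|.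

End Fairness.

(* Main.v *)
Require Import Defs.
From mathcomp Require Import all_boot all_order all_algebra.
From mathcomp Require Import lra ring zify.
Import Order.TTheory GRing.Theory Num.Theory.
Set Implicit Arguments. Unset Strict Implicit. Unset Printing Implicit Defensive.

Lemma idx_facts (T : eqType) (s t : seq T) (u v z : T) :
  u \notin s -> v \notin s -> u != v ->
  [/\ index u (s ++ u :: v :: t) = size s, index v (s ++ u :: v :: t) = (size s).+1,
      index u (s ++ v :: u :: t) = (size s).+1, index v (s ++ v :: u :: t) = size s &
      (z != u) -> (z != v) -> index z (s ++ v :: u :: t) = index z (s ++ u :: v :: t)
       /\ (index z (s ++ u :: v :: t) < size s \/ (size s).+1 < index z (s ++ u :: v :: t))%N].
Proof.
move=> us vs uv.
have vu : (v == u) = false by rewrite eq_sym (negbTE uv).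
rewrite !index_cat (negbTE us) (negbTE vs) /= !eqxx (negbTE uv) vu !addn0 addn1.
split=> // zu zv.
have uz : (u == z) = false by rewrite eq_sym (negbTE zu).
have vz : (v == z) = false by rewrite eq_sym (negbTE zv).
rewrite uz vz.
case: ifP => zs; split=> //; first by left; rewrite index_mem.
by right; lia.
Qed.

Lemma prec_swap (T : eqType) (s t : seq T) (u v x y : T) :
  uniq (s ++ u :: v :: t) ->
  ~~ ((x == u) && (y == v)) -> ~~ ((x == v) && (y == u)) ->
  precedes (s ++ v :: u :: t) x y = precedes (s ++ u :: v :: t) x y.
Proof.
move=> U.
have us : u \notin s.
  by apply/negP => h; move: U; rewrite cat_uniq /= h /= andbF.
have vs : v \notin s.
  by apply/negP => h; move: U; rewrite cat_uniq /= h /= !orbT andbF.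
have uv : u != v.
  by apply/negP => /eqP h; move: U; rewrite cat_uniq /= h inE eqxx /= !andbF.
have [Iu Iv Iu' Iv' Iz] := idx_facts t x us vs uv.
have [_ _ _ _ Iz2] := idx_facts t y us vs uv.
rewrite /precedes.
case: (eqVneq x u) => [exu|xu]; case: (eqVneq x v) => [exv|xv];
case: (eqVneq y u) => [eyu|yu]; case: (eqVneq y v) => [eyv|yv]; subst => //=;
rewrite ?eqxx ?(negbTE uv) //=; try (by move: uv; rewrite eqxx);
rewrite ?(negbTE xu) ?(negbTE yv) ?(negbTE xv) ?(negbTE yu) ?andbF ?andbT //= => _ _;
rewrite ?Iu ?Iv ?Iu' ?Iv';
try (have [E1 E2] := Iz xu xv); try (have [F1 F2] := Iz2 yu yv);
rewrite ?E1 ?F1; lia.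
Qed.

Lemma npairs_le1 (T : eqType) (s t : seq T) (Q Q' : T -> T -> bool) x0 y0 :
  uniq s -> uniq t ->
  (forall x y, x \in s -> y \in t -> (x != x0) || (y != y0) -> Q' x y = Q x y) ->
  (npairs s t Q' <= npairs s t Q + 1)%N.
Proof.
rewrite /npairs => us ut H.
case: (boolP (x0 \in s)) => hx; last first.
  rewrite (@eq_big_seq _ _ _ _ _ _ (fun x => \sum_(y <- t) Q x y)) ?leq_addr //.
  move=> x xs; apply: eq_big_seq => y yt; rewrite H //; apply/orP; left.
  by apply/negP => /eqP e; subst; rewrite xs in hx.
rewrite !(bigD1_seq x0 hx us) /=.
have E : (\sum_(i <- s | i != x0) \sum_(y <- t) Q' i y =
          \sum_(i <- s | i != x0) \sum_(y <- t) Q i y)%N.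
  rewrite big_seq_cond [RHS]big_seq_cond; apply: eq_bigr => x /andP [xs xx0].
  by apply: eq_big_seq => y yt; rewrite H // xx0.
rewrite E.
suff : (\sum_(y <- t) Q' x0 y <= \sum_(y <- t) Q x0 y + 1)%N by lia.
case: (boolP (y0 \in t)) => hy; last first.
  rewrite (@eq_big_seq _ _ _ _ _ _ (fun y => (Q x0 y : nat))) ?leq_addr //.
  move=> y yt; rewrite H //; apply/orP; right.
  by apply/negP => /eqP e; subst; rewrite yt in hy.
rewrite !(bigD1_seq y0 hy ut) /=.
have E2 : (\sum_(i <- t | i != y0) Q' x0 i = \sum_(i <- t | i != y0) Q x0 i)%N.
  rewrite big_seq_cond [RHS]big_seq_cond; apply: eq_bigr => y /andP [yt yy0].
  by rewrite H // yy0 orbT.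
rewrite E2; case: (Q' x0 y0); case: (Q x0 y0); lia.
Qed.

Definition step (T : eqType) (pa pb o o' : seq T) :=
  exists s t u v, [/\ o = s ++ u :: v :: t, o' = s ++ v :: u :: t, u \in pa & v \in pb].

Inductive reach (T : eqType) (pa pb : seq T) (o : seq T) : seq T -> Prop :=
| reach_refl : reach pa pb o o
| reach_step o1 o2 : reach pa pb o o1 -> step pa pb o1 o2 -> reach pa pb o o2.

Lemma reach_trans (T : eqType) (pa pb o1 o2 o3 : seq T) :
  reach pa pb o1 o2 -> reach pa pb o2 o3 -> reach pa pb o1 o3.
Proof.
move=> h1 h2; elim: h2 => // o o' _ IH st; exact: reach_step IH st.
Qed.

Lemma reach_move (T : eqType) (pa pb : seq T) s a v t :
  all (mem pa) a -> v \in pb -> reach pa pb (s ++ a ++ v :: t) (s ++ v :: a ++ t).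
Proof.
elim: a s => [|x a IH] s /=; first by move=> _ _; exact: reach_refl.
move=> /andP [xa aa] vb.
have := IH (rcons s x) aa vb; rewrite !cat_rcons => h.
apply: reach_step h _.
by exists s, (a ++ t), x, v.
Qed.

Lemma reach_all (T : eqType) (pa pb : seq T) s a t :
  all (mem pa) a -> all (mem pb) t -> reach pa pb (s ++ a ++ t) (s ++ t ++ a).
Proof.
elim: t s => [|v t IH] s /=; first by rewrite cats0 => _ _; exact: reach_refl.
move=> aa /andP [vb tb].
apply: reach_trans (reach_move s t aa vb) _.
by have := IH (rcons s v) aa tb; rewrite !cat_rcons.
Qed.

Lemma step_cross (T : eqType) (pa pb o o' : seq T) :
  ~~ has (mem pb) pa -> cross_ordering pa pb o -> step pa pb o o' -> cross_ordering pa pb o'.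
Proof.
move=> disj /and3P [po fa fb] [s [t [u [v [eo eo' ua vb]]]]]; subst.
have ub : u \notin pb by have := hasPn disj u ua.
have va : v \notin pa by apply/negP => h; have := hasPn disj v h; rewrite /= vb.
apply/and3P; split.
- apply: perm_trans po; rewrite perm_cat2l.
  by rewrite -[v :: u :: t]/([:: v; u] ++ t) -[u :: v :: t]/([:: u; v] ++ t) perm_cat2r; by rewrite perm_sym; apply/permP => p /=; rewrite !addn0 addnC.
- by move: fa; rewrite !filter_cat /= ua (negbTE va).
- by move: fb; rewrite !filter_cat /= vb (negbTE ub).
Qed.

Lemma reach_cross (T : eqType) (pa pb o o' : seq T) :
  ~~ has (mem pb) pa -> cross_ordering pa pb o -> reach pa pb o o' -> cross_ordering pa pb o'.
Proof.
move=> disj co h; elim: h => // o1 o2 _ IH st; exact: step_cross disj IH st.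
Qed.

Local Open Scope ring_scope.

Lemma ivt (R : realFieldType) (T : eqType) (pa pb : seq T) (g : seq T -> R) (d : R) o0 o1 :
  ~~ has (mem pb) pa -> 0 <= d ->
  (forall o o', cross_ordering pa pb o -> step pa pb o o' -> `|g o' - g o| <= d) ->
  cross_ordering pa pb o0 -> reach pa pb o0 o1 -> 0 <= g o0 -> g o1 <= 0 ->
  exists o, cross_ordering pa pb o /\ `|g o| <= d / 2.
Proof.
move=> disj d0 hst co h; elim: h => [g0 g0'|o2 o3 r IH st g0 g3].
  exists o0; split => //.
  have -> : g o0 = 0 by apply/eqP; rewrite eq_le g0' g0.
  by rewrite normr0 divr_ge0.
have c2 := reach_cross disj co r.
have c3 := step_cross disj c2 st.
case: (lerP (g o2) 0) => g2; first exact: IH.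
have := hst _ _ c2 st; rewrite ler_norml => /andP [h1 h2].
case: (lerP (g o2) (d / 2)) => g2d.
  by exists o2; split => //; rewrite ler_norml; apply/andP; split; lra.
by exists o3; split => //; rewrite ler_norml; apply/andP; split; lra.
Qed.

Section Aux.
Variable T : eqType.
Implicit Types (p q s t : seq T).

Lemma cross_uniq (pa pb o : seq T) : uniq pa -> uniq pb -> ~~ has (mem pb) pa ->
  cross_ordering pa pb o -> uniq o.
Proof.
move=> ua ub disj /and3P [po _ _]; rewrite (perm_uniq po) cat_uniq ua ub andbT.
by rewrite has_sym.
Qed.

Lemma prec_cat p q x y : x \in p -> y \notin p -> precedes (p ++ q) x y.
Proof.
move=> xp yp; rewrite /precedes !index_cat xp (negbTE yp).
by apply: (leq_trans _ (leq_addr _ _)); rewrite index_mem.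
Qed.

Lemma nprec_cat p q x y : x \in p -> y \notin p -> precedes (p ++ q) y x = false.
Proof.
move=> xp yp; have := prec_cat q xp yp; rewrite /precedes => h.
by apply/negbTE; rewrite -leqNgt ltnW.
Qed.

Lemma npairs0 s t (H : T -> T -> bool) :
  (forall x y, x \in s -> y \in t -> H x y = false) -> npairs s t H = 0%N.
Proof.
move=> h; rewrite /npairs big_seq big1 // => x xs.
by rewrite big_seq big1 // => y yt; rewrite h.
Qed.

Lemma npairs_cat p q1 q2 (H : T -> T -> bool) :
  npairs p (q1 ++ q2) H = (npairs p q1 H + npairs p q2 H)%N.
Proof. by rewrite /npairs -big_split; apply: eq_bigr => x _; rewrite big_cat. Qed.

Lemma sum_count (a : pred T) s : (\sum_(x <- s) (a x : nat))%N = count a s.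
Proof. by elim: s => [|x s IH]; rewrite ?big_nil ?big_cons ?IH. Qed.

Lemma npairs_count (Y : T -> bool) p q (H : T -> T -> bool) :
  (forall x y, x \in p -> y \in q -> H x y = Y x && ~~ Y y) ->
  npairs p q H = (n1 Y p * n0 Y q)%N.
Proof.
move=> h; rewrite /npairs /n1 /n0 -sum_count big_distrl /=.
rewrite big_seq [RHS]big_seq; apply: eq_bigr => x xp.
rewrite -(sum_count (predC Y)) big_distrr /= big_seq [RHS]big_seq.
by apply: eq_bigr => y yq; rewrite h // mulnb.
Qed.

Lemma npairs_le_count (Y : T -> bool) p q (H : T -> T -> bool) :
  (forall x y, (H x y <= (Y x && ~~ Y y))%N) ->
  (npairs p q H <= n1 Y p * n0 Y q)%N.
Proof.
move=> h; rewrite -(@npairs_count Y p q (fun x y => Y x && ~~ Y y)) //.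
by apply: leq_sum => x _; apply: leq_sum => y _.
Qed.

End Aux.

Lemma nat_dist (R : realFieldType) (a b : nat) :
  (a <= b + 1)%N -> (b <= a + 1)%N -> `|a%:R - b%:R| <= 1 :> R.
Proof.
move=> h1 h2; rewrite ler_norml.
have : a%:R <= (b + 1)%:R :> R by rewrite ler_nat.
have : b%:R <= (a + 1)%:R :> R by rewrite ler_nat.
rewrite !natrD.
move=> *; apply/andP; split; lra.
Qed.

Lemma step_npairs (R : realFieldType) (T : eqType) (pa pb p q : seq T)
  (H : seq T -> T -> T -> bool) o o' :
  uniq pa -> uniq pb -> ~~ has (mem pb) pa -> uniq q ->
  cross_ordering pa pb o -> step pa pb o o' -> (p = pa \/ p = pb) ->
  (forall o1 o2 x y, precedes o2 x y = precedes o1 x y ->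
     precedes o2 y x = precedes o1 y x -> H o2 x y = H o1 x y) ->
  `|(npairs p q (H o'))%:R - (npairs p q (H o))%:R| <= 1 :> R.
Proof.
move=> ua ub disj uq co st hp hH.
have uo := cross_uniq ua ub disj co.
case: st => s [t [u [v [eo eo' upa vpb]]]]; subst o o'.
have ub' : u \notin pb by have := hasPn disj u upa.
have va : v \notin pa by apply/negP => h; have := hasPn disj v h; rewrite /= vpb.
have key : forall x y, ~~ ((x == u) && (y == v)) -> ~~ ((x == v) && (y == u)) ->
   H (s ++ v :: u :: t) x y = H (s ++ u :: v :: t) x y.
  move=> x y h1 h2; apply: hH; first exact: prec_swap.
  by apply: prec_swap => //; [rewrite andbC | rewrite andbC].
have up : uniq p by case: hp => ->.
case: hp => ep; subst p.
- have K : forall x y, x \in pa -> (x != u) || (y != v) ->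
     H (s ++ v :: u :: t) x y = H (s ++ u :: v :: t) x y.
    move=> x y xp h; apply: key; first by case/orP: h => /negbTE ->; rewrite ?andbF.
    by apply/negP => /andP [/eqP e _]; subst; rewrite xp in va.
  by apply: nat_dist; apply: (npairs_le1 (x0 := u) (y0 := v)) => // x y xp yq h;
    rewrite K.
- have K : forall x y, x \in pb -> (x != v) || (y != u) ->
     H (s ++ v :: u :: t) x y = H (s ++ u :: v :: t) x y.
    move=> x y xp h; apply: key; last by case/orP: h => /negbTE ->; rewrite ?andbF.
    by apply/negP => /andP [/eqP e _]; subst; rewrite xp in ub'.
  by apply: nat_dist; apply: (npairs_le1 (x0 := v) (y0 := u)) => // x y xp yq h;
    rewrite K.
Qed.

Lemma div_le (R : realFieldType) (a b : nat) :
  (0 < a)%N -> (a <= b)%N -> 1 / (b%:R) <= 1 / (a%:R) :> R.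
Proof.
move=> a0 ab; rewrite !div1r lef_pV2 ?ler_nat // posrE ltr0n //.
exact: leq_trans ab.
Qed.

Lemma ratio_step (R : realFieldType) (a a' b b' c1 c2 : R) :
  0 < c1 -> 0 < c2 -> `|a' - a| <= 1 -> `|b' - b| <= 1 ->
  `|(a' / c1 - b' / c2) - (a / c1 - b / c2)| <= 1 / c1 + 1 / c2.
Proof.
move=> c10 c20; rewrite !ler_norml => /andP [h1 h2] /andP [h3 h4].
have i1 : 0 < c1^-1 by rewrite invr_gt0.
have i2 : 0 < c2^-1 by rewrite invr_gt0.
rewrite !div1r /(_ / _).
set k1 := c1^-1 in i1 *; set k2 := c2^-1 in i2 *.
have -> : a' * k1 - b' * k2 - (a * k1 - b * k2) = (a' - a) * k1 - (b' - b) * k2 by ring.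
set d := a' - a in h1 h2 *; set e := b' - b in h3 h4 *.
clearbody d e k1 k2.
have p1 : 0 <= (1 - d) * k1 by apply: mulr_ge0; lra.
have p2 : 0 <= (1 + d) * k1 by apply: mulr_ge0; lra.
have p3 : 0 <= (1 - e) * k2 by apply: mulr_ge0; lra.
have p4 : 0 <= (1 + e) * k2 by apply: mulr_ge0; lra.
rewrite ?mulrDl ?mulrBl ?mul1r ?mulNr in p1 p2 p3 p4.
apply/andP; split; lra.
Qed.

Lemma ratio_cmp (R : realFieldType) (A B a b m n : R) :
  0 < a -> 0 < b -> 0 < n -> a * m <= A -> B <= b * m -> B / (b * n) <= A / (a * n).
Proof.
move=> a0 b0 n0 hA hB.
have n0' : n != 0 by rewrite gt_eqF.
apply: (@le_trans _ _ (m / n)).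
  rewrite ler_pdivrMr ?mulr_gt0 //.
  have -> : m / n * (b * n) = b * m by field.
  done.
rewrite ler_pdivlMr ?mulr_gt0 //.
have -> : m / n * (a * n) = a * m by field.
done.
Qed.

Lemma cross_start (T : eqType) (pa pb : seq T) :
  ~~ has (mem pb) pa -> cross_ordering pa pb (pa ++ pb).
Proof.
move=> disj; have disj' : ~~ has (mem pa) pb by rewrite has_sym.
apply/and3P; split => //; rewrite filter_cat.
- move: disj'; rewrite has_filter negbK => /eqP ->.
  by rewrite cats0; apply/eqP/all_filterP/allss.
- move: disj; rewrite has_filter negbK => /eqP ->.
  by rewrite /=; apply/eqP/all_filterP/allss.
Qed.

Theorem proposition1 (R : realFieldType) (T : eqType) (Y : T -> bool)
  (pa pb : seq T)
  (uniq_pa : uniq pa) (uniq_pb : uniq pb)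
  (disj : ~~ has (mem pb) pa)
  (h1a : (0 < n1 Y pa)%N) (h0a : (0 < n0 Y pa)%N)
  (h1b : (0 < n1 Y pb)%N) (h0b : (0 < n0 Y pb)%N) :
  let n0_ := (n0 Y pa + n0 Y pb)%N in
  [/\ (exists o, cross_ordering pa pb o /\
        DURF R o pa pb <= Num.min (1 / (nn pa)%:R) (1 / (nn pb)%:R)),
      (exists o, cross_ordering pa pb o /\
        DxAUC Y R o pa pb <=
          Num.min (Num.max (1 / (n1 Y pb)%:R) (1 / (n0 Y pb)%:R))
                  (Num.max (1 / (n1 Y pa)%:R) (1 / (n0 Y pa)%:R)))
    & (exists o, cross_ordering pa pb o /\
        DPRF Y R o pa pb <=
          Num.min (Num.max ((n0 Y pb)%:R / ((n1 Y pa * n0_)%N)%:R) (1 / n0_%:R))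
                  (Num.max ((n0 Y pa)%:R / ((n1 Y pb * n0_)%N)%:R) (1 / n0_%:R)))].
Proof.
move=> n0_.
have disj' : ~~ has (mem pa) pb by rewrite has_sym.
have mema : forall x, x \in pb -> x \notin pa by move=> x xb; have := hasPn disj' x xb.
have memb : forall x, x \in pa -> x \notin pb by move=> x xa; have := hasPn disj x xa.
have uab : uniq (pa ++ pb) by rewrite cat_uniq uniq_pa uniq_pb disj'.
have cs := cross_start disj.
have rch : reach pa pb (pa ++ pb) (pb ++ pa).
  by have := reach_all [::] (allss pa) (allss pb).
have na0 : (0 < nn pa)%N by apply: leq_trans h1a (count_size _ _).
have nb0 : (0 < nn pb)%N by apply: leq_trans h1b (count_size _ _).
split.
-
  pose gU := fun o => (npairs pa pb (fun u v => precedes o u v))%:R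
                     - (npairs pa pb (fun u v => precedes o v u))%:R : R.
  have [o [co ho]] : exists o, cross_ordering pa pb o /\ `|gU o| <= 2 / 2.
    apply: (ivt disj _ _ cs rch) => //.
    + move=> o o' co st; rewrite /gU.
      have h1 := @step_npairs R T pa pb pa pb (fun o x y => precedes o x y) o o'
        uniq_pa uniq_pb disj uniq_pb co st (or_introl erefl) (fun _ _ _ _ e _ => e).
      have h2 := @step_npairs R T pa pb pa pb (fun o x y => precedes o y x) o o'
        uniq_pa uniq_pb disj uniq_pb co st (or_introl erefl) (fun _ _ _ _ _ e => e).
      move: h1 h2; rewrite /= !ler_norml => /andP [? ?] /andP [? ?].
      apply/andP; split; lra.
    + rewrite /gU.
      have -> : npairs pa pb (fun u v => precedes (pa ++ pb) v u) = 0%N.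
        by apply: npairs0 => x y xa yb; apply: nprec_cat xa (mema y yb).
      by rewrite subr0 ler0n.
    + rewrite /gU.
      have -> : npairs pa pb (fun u v => precedes (pb ++ pa) u v) = 0%N.
        by apply: npairs0 => x y xa yb; apply: nprec_cat yb (memb x xa).
      by rewrite sub0r oppr_le0 ler0n.
  exists o; split => //.
  have e : DURF R o pa pb = `|gU o| / ((nn pa * nn pb)%N)%:R by [].
  rewrite e le_min.
  have hN : `|gU o| / ((nn pa * nn pb)%N)%:R <= 1 / ((nn pa * nn pb)%N)%:R.
    rewrite ler_pM2r ?invr_gt0 ?ltr0n ?muln_gt0 ?na0 //.
    by move: ho; rewrite divff // pnatr_eq0.
  apply/andP; split; apply: (le_trans hN); apply: div_le => //.
  + by rewrite leq_pmulr.
  + by rewrite leq_pmull.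
-
  pose gX := fun o => xAUC Y R o pa pb - xAUC Y R o pb pa.
  pose c1 : R := ((n1 Y pa * n0 Y pb)%N)%:R.
  pose c2 : R := ((n1 Y pb * n0 Y pa)%N)%:R.
  have c10 : 0 < c1 by rewrite ltr0n muln_gt0 h1a h0b.
  have c20 : 0 < c2 by rewrite ltr0n muln_gt0 h1b h0a.
  have Hq : forall o1 o2 (x y : T), precedes o2 x y = precedes o1 x y ->
      precedes o2 y x = precedes o1 y x ->
      [&& Y x, ~~ Y y & precedes o2 x y] = [&& Y x, ~~ Y y & precedes o1 x y].
    by move=> o1 o2 x y e _; rewrite e.
  have [o [co ho]] : exists o, cross_ordering pa pb o /\ `|gX o| <= (1 / c1 + 1 / c2) / 2.
    apply: (@ivt R T pa pb gX (1 / c1 + 1 / c2) (pa ++ pb) (pb ++ pa) disj).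
    all: try exact: cs. all: try exact: rch.
    + by apply: addr_ge0; rewrite div1r invr_ge0 ltW.
    + move=> o o' co st; rewrite /gX /xAUC.
      apply: ratio_step => //.
      * exact: (@step_npairs R T pa pb pa pb _ o o' uniq_pa uniq_pb disj uniq_pb co st
          (or_introl erefl) Hq).
      * exact: (@step_npairs R T pa pb pb pa _ o o' uniq_pa uniq_pb disj uniq_pa co st
          (or_intror erefl) Hq).
    + rewrite /gX /xAUC.
      have -> : npairs pb pa (fun u v => [&& Y u, ~~ Y v & precedes (pa ++ pb) u v]) = 0%N.
        by apply: npairs0 => x y xb ya; rewrite (nprec_cat _ ya (mema x xb)) !andbF.
      by rewrite mul0r subr0 divr_ge0 ?ler0n.
    + rewrite /gX /xAUC.
      have -> : npairs pa pb (fun u v => [&& Y u, ~~ Y v & precedes (pb ++ pa) u v]) = 0%N.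
        by apply: npairs0 => x y xa yb; rewrite (nprec_cat _ yb (memb x xa)) !andbF.
      by rewrite mul0r sub0r oppr_le0 divr_ge0 ?ler0n.
  exists o; split => //.
  have e : DxAUC Y R o pa pb = `|gX o| by [].
  rewrite e.
  have k1a : 1 / c1 <= 1 / (n1 Y pa)%:R by apply: div_le => //; rewrite leq_pmulr.
  have k1b : 1 / c1 <= 1 / (n0 Y pb)%:R by apply: div_le => //; rewrite leq_pmull.
  have k2a : 1 / c2 <= 1 / (n0 Y pa)%:R by apply: div_le => //; rewrite leq_pmull.
  have k2b : 1 / c2 <= 1 / (n1 Y pb)%:R by apply: div_le => //; rewrite leq_pmulr.
  rewrite le_min !le_max; apply/andP; split.
  + case: (boolP (1 / (n1 Y pb)%:R <= 1 / (n0 Y pb)%:R :> R)) => hm.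
    * by apply/orP; right; apply: le_trans ho _; lra.
    * rewrite -ltNge in hm; by apply/orP; left; apply: le_trans ho _; lra.
  + case: (boolP (1 / (n1 Y pa)%:R <= 1 / (n0 Y pa)%:R :> R)) => hm.
    * by apply/orP; right; apply: le_trans ho _; lra.
    * rewrite -ltNge in hm; by apply/orP; left; apply: le_trans ho _; lra.
-
  pose gP := fun o => PRF Y R o pa pa pb - PRF Y R o pb pa pb.
  have n00 : (0 < n0_)%N by rewrite /n0_ addn_gt0 h0a.
  pose c1 : R := ((n1 Y pa * n0_)%N)%:R.
  pose c2 : R := ((n1 Y pb * n0_)%N)%:R.
  have c10 : 0 < c1 by rewrite ltr0n muln_gt0 h1a n00.
  have c20 : 0 < c2 by rewrite ltr0n muln_gt0 h1b n00.
  have Hq : forall o1 o2 (x y : T), precedes o2 x y = precedes o1 x y ->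
      precedes o2 y x = precedes o1 y x ->
      [&& Y x, ~~ Y y & precedes o2 x y] = [&& Y x, ~~ Y y & precedes o1 x y].
    by move=> o1 o2 x y e _; rewrite e.
  have Qle : forall o (x y : T), ([&& Y x, ~~ Y y & precedes o x y] <= (Y x && ~~ Y y))%N.
    by move=> o x y; case: (Y x); case: (Y y); case: (precedes o x y).
  have [o [co ho]] : exists o, cross_ordering pa pb o /\ `|gP o| <= (1 / c1 + 1 / c2) / 2.
    apply: (@ivt R T pa pb gP (1 / c1 + 1 / c2) (pa ++ pb) (pb ++ pa) disj).
    all: try exact: cs. all: try exact: rch.
    + by apply: addr_ge0; rewrite div1r invr_ge0 ltW.
    + move=> o o' co st; rewrite /gP /PRF.
      apply: ratio_step => //.
      * exact: (@step_npairs R T pa pb pa (pa ++ pb) _ o o' uniq_pa uniq_pb disj uab co st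
          (or_introl erefl) Hq).
      * exact: (@step_npairs R T pa pb pb (pa ++ pb) _ o o' uniq_pa uniq_pb disj uab co st
          (or_intror erefl) Hq).
    + rewrite /gP /PRF subr_ge0 !natrM.
      apply: (@ratio_cmp R _ _ _ _ (n0 Y pb)%:R); rewrite ?ltr0n //.
      * rewrite -natrM ler_nat npairs_cat.
        rewrite (@npairs_count _ Y pa pb) ?leq_addl //.
        by move=> x y xa yb; rewrite (prec_cat _ xa (mema y yb)) andbT.
      * rewrite -natrM ler_nat npairs_cat.
        have -> : npairs pb pa (fun u v => [&& Y u, ~~ Y v & precedes (pa ++ pb) u v]) = 0%N.
          by apply: npairs0 => x y xb ya; rewrite (nprec_cat _ ya (mema x xb)) !andbF.
        by rewrite add0n npairs_le_count.
    + rewrite /gP /PRF subr_le0 !natrM.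
      apply: (@ratio_cmp R _ _ _ _ (n0 Y pa)%:R); rewrite ?ltr0n //.
      * rewrite -natrM ler_nat npairs_cat.
        rewrite (@npairs_count _ Y pb pa) ?leq_addr //.
        by move=> x y xb ya; rewrite (prec_cat _ xb (memb y ya)) andbT.
      * rewrite -natrM ler_nat npairs_cat.
        have -> : npairs pa pb (fun u v => [&& Y u, ~~ Y v & precedes (pb ++ pa) u v]) = 0%N.
          by apply: npairs0 => x y xa yb; rewrite (nprec_cat _ yb (memb x xa)) !andbF.
        by rewrite addn0 npairs_le_count.
  exists o; split => //.
  have e : DPRF Y R o pa pb = `|gP o| by [].
  rewrite e.
  have k1 : 1 / c1 <= 1 / n0_%:R by apply: div_le => //; rewrite leq_pmull.
  have k2 : 1 / c2 <= 1 / n0_%:R by apply: div_le => //; rewrite leq_pmull.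
  have hh : `|gP o| <= 1 / n0_%:R by apply: le_trans ho _; lra.
  by rewrite le_min !le_max hh !orbT.
Qed.
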